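(* Let $H<G$ be groups with $H$ co-sofic in $G$. Then $H<G$ is relatively sofic over $G$.
   Context: $H$ is co-sofic in $G$ if there exist two decreasing sequences $(G_i)_{i\in\mathbb N}$ and $(H_i)_{i\in\mathbb N}$ of subgroups of $G$ such that $\bigcap_i G_i=H$, $H_i<G_i$, $H_i\triangleleft G$, $G/H_i$ is sofic, and $G_i/H_i$ is amenable for all $i$. $H<G$ is relatively sofic over a group $K$ if there exist a sequence of inclusions of groups $(H'_i<G'_i)_{i\in\mathbb N}$ with all $G'_i$ sofic and all $H'_i$ amenable, a free ultrafilter $\omega$ on $\mathbb N$, and an embedding $\pi:G\to\prod_\omega(G'_i\times K)$ into the algebraic ultraproduct such that $\pi(G)\cap\prod_\omega(H'_i\times K)=\pi(H)$. The algebraic ultraproduct is $\prod_\omega L_i=(\prod_i L_i)/N$ with $N=\{(g_i):\{i:g_i=1\}\in\omega\}$. *)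

(* Defs.v *)
From Stdlib Require Import Reals.
From mathcomp Require Import all_boot all_algebra all_fingroup.

Set Implicit Arguments.
Unset Strict Implicit.
Unset Printing Implicit Defensive.

Record AbsGroup := MkGroup {
  gcar :> Type;
  gmul : gcar -> gcar -> gcar;
  gone : gcar;
  ginv : gcar -> gcar;
  gmulA : forall x y z, gmul x (gmul y z) = gmul (gmul x y) z;
  gmul1 : forall x, gmul gone x = x;
  gmulV : forall x, gmul (ginv x) x = gone
}.

Arguments gmul {a}.
Arguments gone {a}.
Arguments ginv {a}.

Definition is_subgroup (G : AbsGroup) (P : G -> Prop) : Prop :=
  P gone /\ (forall x y, P x -> P y -> P (gmul x y)) /\ (forall x, P x -> P (ginv x)).

Definition is_normal (G : AbsGroup) (P : G -> Prop) : Prop :=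
  is_subgroup P /\ forall g x, P x -> P (gmul (ginv g) (gmul x g)).

Definition hdist (n : nat) (s t : {perm 'I_n}) : rat :=
  (#|[set i | s i != t i]|%:R / n%:R)%R.

(* Soficity of the group whose elements are the classes of the equivalence
   [e] on [T] with product induced by [m] (for e = eq this is soficity of
   the group itself; for e x y := N (x^-1 y) it is soficity of G/N).
   A sofic approximation is a map on classes (i.e. a map on T constant on
   e-classes) into Sym(n), n > 0. *)
Definition sofic_setoid (T : Type) (e : T -> T -> Prop) (m : T -> T -> T) : Prop :=
  forall (F : list T) (eps : rat), (0 < eps)%R ->
  exists n : nat, exists sigma : T -> {perm 'I_n},
    (0 < n)%N /\
    (forall x y, e x y -> sigma x = sigma y) /\
    (forall g h, List.In g F -> List.In h F ->
        (hdist (sigma (m g h)) ((sigma g * sigma h)%g) < eps)%R) /\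
    (forall g h, List.In g F -> List.In h F -> ~ e g h ->
        (1 - eps < hdist (sigma g) (sigma h))%R).

Definition sofic (G : AbsGroup) : Prop := sofic_setoid (@eq G) (@gmul G).

Definition quotient_sofic (G : AbsGroup) (N : G -> Prop) : Prop :=
  sofic_setoid (fun x y : G => N (gmul (ginv x) y)) (@gmul G).

(* Amenability of the group S/e, where S is a subgroup of the group carried
   by T (with product m) and e is the congruence defining the quotient:
   there is a finitely additive, left-invariant probability measure on all
   subsets of S/e, i.e. on all e-saturated subsets of S. *)
Definition saturated (T : Type) (S : T -> Prop) (e : T -> T -> Prop)
  (A : T -> Prop) : Prop :=
  (forall x, A x -> S x) /\ (forall x y, A x -> S y -> e x y -> A y).

Definition amenable_setoid (T : Type) (S : T -> Prop) (e : T -> T -> Prop)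
  (m : T -> T -> T) : Prop :=
  exists mu : (T -> Prop) -> R,
    (forall A, saturated S e A -> Rle 0 (mu A)) /\
    mu S = R1 /\
    (forall A B, saturated S e A -> saturated S e B ->
       (forall x, A x -> B x -> False) ->
       mu (fun x => A x \/ B x) = Rplus (mu A) (mu B)) /\
    (forall g A, S g -> saturated S e A ->
       mu (fun x => exists a, A a /\ e x (m g a)) = mu A).

Definition amenable_subgroup (G : AbsGroup) (S : G -> Prop) : Prop :=
  amenable_setoid S (@eq G) (@gmul G).

Definition quotient_amenable (G : AbsGroup) (Gi Hi : G -> Prop) : Prop :=
  amenable_setoid Gi (fun x y : G => Hi (gmul (ginv x) y)) (@gmul G).

Definition cosofic (G : AbsGroup) (H : G -> Prop) : Prop :=
  exists (Gs Hs : nat -> G -> Prop),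
    (forall i, is_subgroup (Gs i)) /\
    (forall i, is_normal (Hs i)) /\
    (forall i x, Gs i.+1 x -> Gs i x) /\
    (forall i x, Hs i.+1 x -> Hs i x) /\
    (forall x, H x <-> forall i, Gs i x) /\
    (forall i x, Hs i x -> Gs i x) /\
    (forall i, quotient_sofic (Hs i)) /\
    (forall i, quotient_amenable (Gs i) (Hs i)).

Definition free_ultrafilter (w : (nat -> Prop) -> Prop) : Prop :=
  w (fun _ => True) /\ ~ w (fun _ => False) /\
  (forall A B : nat -> Prop, w A -> (forall i, A i -> B i) -> w B) /\
  (forall A B : nat -> Prop, w A -> w B -> w (fun i => A i /\ B i)) /\
  (forall A : nat -> Prop, w A \/ w (fun i => ~ A i)) /\
  (* free: contains no finite set (equivalently, all cofinite sets) *)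
  (forall N : nat, w (fun i => (N <= i)%N)).

(* elements of prod_i (L_i x K): sequences; two sequences are identified in
   the algebraic ultraproduct iff they agree on an w-large set *)
Definition useq (L : nat -> AbsGroup) (K : AbsGroup) : Type :=
  forall i : nat, (L i * K)%type.

Definition useq_mul (L : nat -> AbsGroup) (K : AbsGroup) (x y : useq L K) : useq L K :=
  fun i => (gmul (x i).1 (y i).1, gmul (x i).2 (y i).2).

Definition ueqv (w : (nat -> Prop) -> Prop) (L : nat -> AbsGroup) (K : AbsGroup)
  (x y : useq L K) : Prop := w (fun i => x i = y i).

(* pi : G -> prod_w (L_i x K) is an embedding (injective homomorphism),
   pi given on representatives *)
Definition ultra_embedding (w : (nat -> Prop) -> Prop) (L : nat -> AbsGroup)
  (K G : AbsGroup) (pi : G -> useq L K) : Prop :=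
  (forall g h, ueqv w (pi (gmul g h)) (useq_mul (pi g) (pi h))) /\
  (forall g h, ueqv w (pi g) (pi h) -> g = h).

Definition in_ultra_sub (w : (nat -> Prop) -> Prop) (L : nat -> AbsGroup)
  (K : AbsGroup) (Hs : forall i, L i -> Prop) (x : useq L K) : Prop :=
  exists y : useq L K, ueqv w x y /\ forall i, Hs i (y i).1.

Definition rel_sofic (G : AbsGroup) (H : G -> Prop) (K : AbsGroup) : Prop :=
  exists (L : nat -> AbsGroup) (Hs : forall i, L i -> Prop),
    (forall i, is_subgroup (Hs i)) /\
    (forall i, sofic (L i)) /\
    (forall i, amenable_subgroup (Hs i)) /\
    exists (w : (nat -> Prop) -> Prop) (pi : G -> useq L K),
      free_ultrafilter w /\ ultra_embedding w pi /\
      (forall g, in_ultra_sub w Hs (pi g) <-> H g).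

(* Main.v *)
Require Import Defs.
From Stdlib Require Import Reals.
From mathcomp Require Import all_boot all_algebra all_fingroup.
From mathcomp Require Import boolp classical_sets filter.
From Stdlib Require Import Classical.

Lemma gmulVr {G : AbsGroup} (x : G) : gmul x (ginv x) = gone.
Proof.
rewrite -(gmul1 (gmul x (ginv x))) -{1}(gmulV (ginv x)).
rewrite -gmulA (gmulA (ginv x)) gmulV gmul1 gmulV //.
Qed.

Lemma gmulr1 {G : AbsGroup} (x : G) : gmul x gone = x.
Proof. by rewrite -(gmulV x) gmulA gmulVr gmul1. Qed.

Lemma ginv_uniq {G : AbsGroup} (a x : G) : gmul a x = gone -> a = ginv x.
Proof.
move=> h; by rewrite -(gmulr1 a) -(gmulVr x) gmulA h gmul1.
Qed.

Lemma ginvK {G : AbsGroup} (x : G) : ginv (ginv x) = x.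
Proof. by symmetry; apply: ginv_uniq; rewrite gmulVr. Qed.

Lemma ginvM {G : AbsGroup} (x y : G) : ginv (gmul x y) = gmul (ginv y) (ginv x).
Proof.
symmetry; apply: ginv_uniq.
by rewrite -gmulA (gmulA (ginv x)) gmulV gmul1 gmulV.
Qed.

Lemma ginv1 {G : AbsGroup} : ginv (@gone G) = gone.
Proof. by symmetry; apply: ginv_uniq; rewrite gmul1. Qed.

Lemma N_sym {G : AbsGroup} {N : G -> Prop} : is_normal N ->
  forall x y : G, N (gmul (ginv x) y) -> N (gmul (ginv y) x).
Proof.
move=> [[_ [_ hi]] _] x y h; have := hi _ h.
by rewrite ginvM ginvK.
Qed.

Lemma N_refl {G : AbsGroup} {N : G -> Prop} : is_normal N ->
  forall x : G, N (gmul (ginv x) x).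
Proof. by move=> [[h1 _] _] x; rewrite gmulV. Qed.

Lemma N_trans {G : AbsGroup} {N : G -> Prop} : is_normal N ->
  forall x y z : G, N (gmul (ginv x) y) -> N (gmul (ginv y) z) -> N (gmul (ginv x) z).
Proof.
move=> [[_ [hm _]] _] x y z h1 h2; have := hm _ _ h1 h2.
by rewrite -gmulA (gmulA y) gmulVr gmul1.
Qed.

Lemma N_cong {G : AbsGroup} {N : G -> Prop} : is_normal N ->
  forall x y a b : G, N (gmul (ginv x) a) -> N (gmul (ginv y) b) ->
  N (gmul (ginv (gmul x y)) (gmul a b)).
Proof.
move=> [[_ [hm _]] hn] x y a b h1 h2.
have := hm _ _ (hn y _ h1) h2.
by rewrite ginvM -!gmulA (gmulA y) gmulVr gmul1.
Qed.

Definition coset {G : AbsGroup} (N : G -> Prop) (g : G) : G -> Prop :=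
  fun x => N (gmul (ginv g) x).

Definition Qcar {G : AbsGroup} (N : G -> Prop) : Type :=
  {A : G -> Prop | exists g, A = coset N g}.

Definition qp {G : AbsGroup} (N : G -> Prop) (g : G) : Qcar N :=
  exist _ (coset N g) (ex_intro _ g erefl).

Definition rep {G : AbsGroup} (N : G -> Prop) (c : Qcar N) : G :=
  proj1_sig (cid (proj2_sig c)).
Arguments rep {G N} c.

Lemma qp_rep {G : AbsGroup} {N : G -> Prop} (c : Qcar N) : qp N (rep c) = c.
Proof.
rewrite /qp /rep; case: c => A hA /=.
case: (cid hA) => g hg /=; subst A.
by congr exist; apply: Prop_irrelevance.
Qed.

Lemma qp_eq {G : AbsGroup} {N : G -> Prop} : is_normal N ->
  forall x y : G, N (gmul (ginv x) y) -> qp N x = qp N y.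
Proof.
move=> hN x y h; rewrite /qp.
have e : coset N x = coset N y.
  apply: funext => z; apply: propext; rewrite /coset; split => hz.
  - exact: (N_trans hN y x z (N_sym hN _ _ h) hz).
  - exact: (N_trans hN x y z h hz).
move: (ex_intro _ x erefl : exists g, coset N x = coset N g).
move: (ex_intro _ y erefl : exists g, coset N y = coset N g).
rewrite e => p1 p2; congr exist; apply: Prop_irrelevance.
Qed.

Lemma qp_eqE {G : AbsGroup} {N : G -> Prop} : is_normal N ->
  forall x y : G, qp N x = qp N y -> N (gmul (ginv x) y).
Proof.
move=> hN x y h.
have e : coset N x = coset N y by exact: (f_equal (@proj1_sig _ _) h).
have : coset N x y by rewrite e; exact: N_refl hN y.
done.
Qed.

Lemma rep_qp {G : AbsGroup} {N : G -> Prop} : is_normal N ->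
  forall x : G, N (gmul (ginv x) (rep (qp N x))).
Proof. move=> hN x; apply: qp_eqE => //; by rewrite qp_rep. Qed.

Definition qmul {G : AbsGroup} (N : G -> Prop) (c d : Qcar N) : Qcar N :=
  qp N (gmul (rep c) (rep d)).
Definition qinv {G : AbsGroup} (N : G -> Prop) (c : Qcar N) : Qcar N :=
  qp N (ginv (rep c)).
Arguments qmul {G N} c d.
Arguments qinv {G N} c.

Lemma qmulE {G : AbsGroup} {N : G -> Prop} : is_normal N ->
  forall x y : G, qmul (qp N x) (qp N y) = qp N (gmul x y).
Proof.
move=> hN x y; rewrite /qmul; apply: qp_eq => //.
apply: N_sym => //; apply: N_cong => //; exact: rep_qp.
Qed.

Lemma qinvE {G : AbsGroup} {N : G -> Prop} : is_normal N ->
  forall x : G, qinv (qp N x) = qp N (ginv x).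
Proof.
move=> hN x; rewrite /qinv; apply: qp_eq => //.
have h := rep_qp hN x; case: hN => _ hn; have := hn (ginv x) _ h.
by rewrite !ginvK !gmulA gmulVr gmul1.
Qed.

Lemma qp_surj {G : AbsGroup} {N : G -> Prop} (c : Qcar N) : exists x, c = qp N x.
Proof. by exists (rep c); rewrite qp_rep. Qed.

Lemma qmulA {G : AbsGroup} {N : G -> Prop} (hN : is_normal N) (c d e : Qcar N) :
  qmul c (qmul d e) = qmul (qmul c d) e.
Proof.
case: (qp_surj c) => x ->; case: (qp_surj d) => y ->; case: (qp_surj e) => z ->.
by rewrite !qmulE // gmulA.
Qed.

Lemma qmul1 {G : AbsGroup} {N : G -> Prop} (hN : is_normal N) (c : Qcar N) :
  qmul (qp N gone) c = c.
Proof. by case: (qp_surj c) => x ->; rewrite qmulE // gmul1. Qed.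

Lemma qmulV {G : AbsGroup} {N : G -> Prop} (hN : is_normal N) (c : Qcar N) :
  qmul (qinv c) c = qp N gone.
Proof. by case: (qp_surj c) => x ->; rewrite qinvE // qmulE // gmulV. Qed.

Definition Qgrp {G : AbsGroup} {N : G -> Prop} (hN : is_normal N) : AbsGroup :=
  MkGroup (qmulA hN) (qmul1 hN) (qmulV hN).

Lemma exists_free_uf : exists w : (nat -> Prop) -> Prop, free_ultrafilter w.
Proof.
have [G [GU sub]] := ultraFilterLemma (F := @eventually) _.
exists G; have GF : ProperFilter G by apply: ultra_proper.
split; first exact: (@filterT _ G).
split; first exact: (@filter_not_empty _ G).
split; first by move=> A B GA AB; apply: (filterS _ GA) => x; apply: AB.
split; first by move=> A B GA GB; apply: (filterI GA GB).
split; first by move=> A; apply: in_ultra_setVsetC.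
by move=> N; apply: sub; exists N.
Qed.

Lemma dec_le {G : AbsGroup} (Gs : nat -> G -> Prop) :
  (forall i x, Gs i.+1 x -> Gs i x) ->
  forall i j x, (i <= j)%N -> Gs j x -> Gs i x.
Proof.
move=> dec i j x; elim: j => [|j IH].
  by rewrite leqn0 => /eqP ->.
rewrite leq_eqVlt => /orP [/eqP -> //| ].
rewrite ltnS => hij gx; apply: IH hij (dec _ _ gx).
Qed.

Theorem theorem2p17 (G : AbsGroup) (H : G -> Prop) :
  is_subgroup H -> cosofic H -> rel_sofic H G.
Proof.
move=> _ [Gs [Hs [sG [nH [decG [decH [hH [HG [sofH amH]]]]]]]]].
pose L i := Qgrp (nH i).
pose Hs' i : L i -> Prop := fun c => exists x, Gs i x /\ c = qp (Hs i) x.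
have key : forall i x, Hs' i (qp (Hs i) x) <-> Gs i x.
  move=> i x; split; last by move=> gx; exists x.
  case=> y [gy e].
  have h1 : Hs i (gmul (ginv y) x) := qp_eqE (nH i) _ _ (esym e).
  have := (proj1 (proj2 (sG i))) _ _ gy (HG _ _ h1).
  by rewrite gmulA gmulVr gmul1.
exists L, Hs'; split.
  move=> i; split; first by exists gone; split => //; exact: (proj1 (sG i)).
  split.
    move=> c d [x [gx ->]] [y [gy ->]]; exists (gmul x y); split.
      exact: (proj1 (proj2 (sG i))).
    exact: qmulE (nH i) x y.
  move=> c [x [gx ->]]; exists (ginv x); split.
    exact: (proj2 (proj2 (sG i))).
  exact: qinvE (nH i) x.
split.
  move=> i F eps he.
  have [n [sigma [n0 [sc [shom ssep]]]]] := sofH i (map rep F) eps he.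
  exists n, (fun c => sigma (rep c)); split => //; split; first by move=> x y ->.
  split.
    move=> g h Fg Fh /=; rewrite /qmul -(sc _ _ (rep_qp (nH i) _)).
    by apply: shom; apply: List.in_map.
  move=> g h Fg Fh ne; apply: ssep; try by apply: List.in_map.
  move=> e; apply: ne; rewrite -(qp_rep g) -(qp_rep h); exact: qp_eq (nH i) _ _ e.
split.
  move=> i; have [mu [m0 [m1 [madd minv]]]] := amH i.
  exists (fun A => mu (fun x => A (qp (Hs i) x))).
  have sat : forall A, saturated (Hs' i) eq A ->
      saturated (Gs i) (fun x y => Hs i (gmul (ginv x) y)) (fun x => A (qp (Hs i) x)).
    move=> A [s1 s2]; split.
      by move=> x /s1 /key.
    by move=> x y Ax gy e; rewrite -(qp_eq (nH i) _ _ e).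
  split; first by move=> A /sat /m0.
  split.
    have -> : (fun x => Hs' i (qp (Hs i) x)) = Gs i.
      by apply: funext => x; apply: propext; apply: key.
    exact: m1.
  split.
    move=> A B sA sB dis; apply: madd; [exact: sat|exact: sat|].
    by move=> x; apply: dis.
  move=> g A [g0 [gg0 ->]] sA.
  rewrite -(minv g0 _ gg0 (sat _ sA)); congr mu; apply: funext => x; apply: propext.
  split.
    case=> a [Aa e]; case: (qp_surj a) => a0 ea; subst a.
    exists a0; split => //; apply: (qp_eqE (nH i)).
    by move: e => /= ->; rewrite qmulE.
  case=> a0 [Aa e]; exists (qp (Hs i) a0); split => //=.
  by rewrite qmulE //; exact: qp_eq.
have [w hw] := exists_free_uf.
have [wT [wF [wmono [wI [_ wfree]]]]] := hw.
pose pi : G -> useq L G := fun g i => (qp (Hs i) g, g).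
exists w, pi; split => //; split.
  split.
    move=> g h; apply: (wmono _ _ wT) => i _.
    by rewrite /pi /useq_mul /= qmulE.
  move=> g h e; apply: Classical_Prop.NNPP => ne; apply: wF.
  apply: (wmono _ _ e) => i E; apply: ne; exact: (f_equal snd E).
move=> g; split.
  case=> y [ey hy]; apply: (proj2 (hH g)) => i; apply: Classical_Prop.NNPP => ngi.
  apply: wF; apply: (wmono _ _ (wI _ _ ey (wfree i))) => j [ej ij].
  apply: ngi; have := hy j; rewrite -ej /= key => gj.
  exact: dec_le decG _ _ _ ij gj.
move=> hg; exists (pi g); split.
  by apply: (wmono _ _ wT).
by move=> i /=; apply/key; apply: (proj1 (hH g) hg).
Qed.
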